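(* (i) If $A$ and $B$ are approximately semi-amenable Banach algebras, then $A\oplus B$ is approximately semi-amenable. (ii) If $A$ and $B$ are boundedly approximately semi-amenable (respectively, boundedly approximately semi-contractible) Banach algebras, and each of $A$ and $B$ has a central multiplier-bounded approximate identity, then $A\oplus B$ is boundedly approximately semi-amenable (respectively, boundedly approximately semi-contractible).
   Context: $A\oplus B$ is the direct sum Banach algebra with coordinatewise operations and norm, e.g., $\|(a,b)\|=\|a\|+\|b\|$. A central multiplier-bounded approximate identity of $A$ is a net $(e_\alpha)$ in the centre of $A$ with $e_\alpha a\to a$ for all $a\in A$ and a constant $M$ with $\|e_\alpha a\|\le M\|a\|$ for all $\alpha$ and $a$. For a Banach algebra $C$ and Banach $C$-bimodule $Y$, a derivation is a linear $D:C\to Y$ with $D(ab)=a\cdot D(b)+D(a)\cdot b$; for $\xi,\eta\in Y$, $\mathrm{ad}_{\xi,\eta}(a)=a\cdot\xi-\eta\cdot a$. A continuous derivation $D:C\to Y$ is approximately semi-inner if there are nets $(\xi_i),(\eta_i)$ in $Y$ with $D(a)=\lim_i\mathrm{ad}_{\xi_i,\eta_i}(a)$ in norm for all $a\in C$, and boundedly approximately semi-inner if in addition $\sup_i\|\mathrm{ad}_{\xi_i,\eta_i}\|<\infty$. $C$ is approximately semi-amenable (resp. boundedly approximately semi-amenable) if for every Banach $C$-bimodule $X$ every continuous derivation $C\to X^*$ is approximately semi-inner (resp. boundedly approximately semi-inner), where $X^*$ has the dual module structure $\langle a\cdot f,x\rangle=\langle f,x\cdot a\rangle$, $\langle f\cdot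 a,x\rangle=\langle f,a\cdot x\rangle$; $C$ is boundedly approximately semi-contractible if for every Banach $C$-bimodule $Y$ every continuous derivation $C\to Y$ is boundedly approximately semi-inner. *)

(* Defs.v *)
From mathcomp Require Import all_boot all_algebra.
From mathcomp Require Import reals complex.
Import GRing.Theory Num.Theory.
Set Implicit Arguments.
Unset Strict Implicit.
Unset Printing Implicit Defensive.
Local Open Scope ring_scope.
Local Open Scope complex_scope.

Definition directed (I : Type) (le : I -> I -> Prop) : Prop :=
  [/\ inhabited I, (forall i, le i i),
      (forall i j k, le i j -> le j k -> le i k) &
      (forall i j, exists k, le i k /\ le j k)].

Definition is_norm (R : realType) (V : lmodType R[i]) (nrm : V -> R) : Prop :=
  [/\ (forall x, 0 <= nrm x), (forall x, nrm x = 0 -> x = 0),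
      (forall x y, nrm (x + y) <= nrm x + nrm y) &
      (forall (k : R[i]) x, (nrm (k *: x))%:C = `|k| * (nrm x)%:C)].

Definition complete_norm (R : realType) (V : lmodType R[i]) (nrm : V -> R) : Prop :=
  forall u : nat -> V,
    (forall e : R, 0 < e -> exists N : nat, forall m n : nat,
        (N <= m)%N -> (N <= n)%N -> nrm (u m - u n) < e) ->
    exists l : V, forall e : R, 0 < e -> exists N : nat, forall n : nat,
        (N <= n)%N -> nrm (u n - l) < e.

Definition banach_space (R : realType) (V : lmodType R[i]) (nrm : V -> R) : Prop :=
  is_norm nrm /\ complete_norm nrm.

Definition banach_algebra (R : realType) (A : lmodType R[i])
    (mul : A -> A -> A) (nrm : A -> R) : Prop :=
  [/\ banach_space nrm,
      (forall a b c, mul a (mul b c) = mul (mul a b) c),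
      (forall a b c, mul (a + b) c = mul a c + mul b c) /\
      (forall a b c, mul a (b + c) = mul a b + mul a c),
      (forall (k : R[i]) a b, mul (k *: a) b = k *: mul a b) /\
      (forall (k : R[i]) a b, mul a (k *: b) = k *: mul a b) &
      (forall a b, nrm (mul a b) <= nrm a * nrm b)].

Definition dsum_mul (R : realType) (A B : lmodType R[i])
    (mulA : A -> A -> A) (mulB : B -> B -> B) : (A * B)%type -> (A * B)%type -> (A * B)%type :=
  fun p q => (mulA p.1 q.1, mulB p.2 q.2).

Definition dsum_norm (R : realType) (A B : lmodType R[i])
    (nrmA : A -> R) (nrmB : B -> R) : (A * B)%type -> R :=
  fun p => nrmA p.1 + nrmB p.2.

(* l a x = a . x ,  r x a = x . a *)
Definition banach_bimodule (R : realType) (A : lmodType R[i])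
    (mul : A -> A -> A) (nrmA : A -> R)
    (Y : lmodType R[i]) (nrmY : Y -> R)
    (l : A -> Y -> Y) (r : Y -> A -> Y) : Prop :=
  [/\ banach_space nrmY,
      (forall (k : R[i]) a x y, l a (k *: x + y) = k *: l a x + l a y) /\
      (forall (k : R[i]) a b x, l (k *: a + b) x = k *: l a x + l b x),
      (forall (k : R[i]) a x y, r (k *: x + y) a = k *: r x a + r y a) /\
      (forall (k : R[i]) a b x, r x (k *: a + b) = k *: r x a + r x b),
      [/\ (forall a b x, l (mul a b) x = l a (l b x)),
          (forall a b x, r x (mul a b) = r (r x a) b) &
          (forall a b x, r (l a x) b = l a (r x b))] &
      (forall a x, nrmY (l a x) <= nrmA a * nrmY x) /\
      (forall a x, nrmY (r x a) <= nrmY x * nrmA a)].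

Definition cont_derivation (R : realType) (A : lmodType R[i])
    (mul : A -> A -> A) (nrmA : A -> R)
    (Y : lmodType R[i]) (nrmY : Y -> R)
    (l : A -> Y -> Y) (r : Y -> A -> Y) (D : A -> Y) : Prop :=
  [/\ (forall (k : R[i]) a b, D (k *: a + b) = k *: D a + D b),
      (forall a b, D (mul a b) = l a (D b) + r (D a) b) &
      (exists M : R, forall a, nrmY (D a) <= M * nrmA a)].

Definition ad (R : realType) (A Y : lmodType R[i])
    (l : A -> Y -> Y) (r : Y -> A -> Y) (xi eta : Y) : A -> Y :=
  fun a => l a xi - r eta a.

Definition bdd_approx_semi_inner (R : realType) (A : lmodType R[i])
    (nrmA : A -> R) (Y : lmodType R[i]) (nrmY : Y -> R)
    (l : A -> Y -> Y) (r : Y -> A -> Y) (D : A -> Y) : Prop :=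
  exists (I : Type) (le : I -> I -> Prop) (xi eta : I -> Y),
    [/\ directed le,
        (forall a, forall e : R, 0 < e -> exists i0, forall i, le i0 i ->
            nrmY (D a - ad l r (xi i) (eta i) a) < e) &
        (exists M : R, forall i a, nrmY (ad l r (xi i) (eta i) a) <= M * nrmA a)].

Definition bdd_approx_semi_contractible (R : realType) (A : lmodType R[i])
    (mul : A -> A -> A) (nrmA : A -> R) : Prop :=
  forall (Y : lmodType R[i]) (nrmY : Y -> R) (l : A -> Y -> Y) (r : Y -> A -> Y),
    banach_bimodule mul nrmA nrmY l r ->
    forall D : A -> Y, cont_derivation mul nrmA nrmY l r D ->
      bdd_approx_semi_inner nrmA nrmY l r D.

(* The dual X^* is represented by its elements: bounded linear functionals
   f : X -> C. *)
Definition in_dual (R : realType) (X : lmodType R[i]) (nrmX : X -> R)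
    (f : X -> R[i]) : Prop :=
  (forall (k : R[i]) x y, f (k *: x + y) = k * f x + f y) /\
  (exists M : R, forall x, `|f x| <= (M * nrmX x)%:C).

Definition dual_norm_le (R : realType) (X : lmodType R[i]) (nrmX : X -> R)
    (f : X -> R[i]) (c : R) : Prop :=
  forall x, `|f x| <= (c * nrmX x)%:C.

Definition dual_lact (R : realType) (A X : lmodType R[i]) (r : X -> A -> X)
    (a : A) (f : X -> R[i]) : X -> R[i] := fun x => f (r x a).

Definition dual_ract (R : realType) (A X : lmodType R[i]) (l : A -> X -> X)
    (f : X -> R[i]) (a : A) : X -> R[i] := fun x => f (l a x).

Definition cont_dual_derivation (R : realType) (A : lmodType R[i])
    (mul : A -> A -> A) (nrmA : A -> R)
    (X : lmodType R[i]) (nrmX : X -> R)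
    (l : A -> X -> X) (r : X -> A -> X) (D : A -> X -> R[i]) : Prop :=
  [/\ (forall a, in_dual nrmX (D a)),
      (forall (k : R[i]) a b x, D (k *: a + b) x = k * D a x + D b x),
      (forall a b x, D (mul a b) x = dual_lact r a (D b) x + dual_ract l (D a) b x) &
      (exists M : R, forall a, dual_norm_le nrmX (D a) (M * nrmA a))].

Definition dual_ad (R : realType) (A X : lmodType R[i])
    (l : A -> X -> X) (r : X -> A -> X) (xi eta : X -> R[i]) (a : A) : X -> R[i] :=
  fun x => dual_lact r a xi x - dual_ract l eta a x.

Definition dual_approx_semi_inner (R : realType) (A : lmodType R[i])
    (nrmA : A -> R) (X : lmodType R[i]) (nrmX : X -> R)
    (l : A -> X -> X) (r : X -> A -> X) (D : A -> X -> R[i]) : Prop :=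
  exists (I : Type) (le : I -> I -> Prop) (xi eta : I -> X -> R[i]),
    [/\ directed le,
        (forall i, in_dual nrmX (xi i) /\ in_dual nrmX (eta i)) &
        (forall a, forall e : R, 0 < e -> exists i0, forall i, le i0 i ->
            dual_norm_le nrmX (fun x => D a x - dual_ad l r (xi i) (eta i) a x) e)].

Definition dual_bdd_approx_semi_inner (R : realType) (A : lmodType R[i])
    (nrmA : A -> R) (X : lmodType R[i]) (nrmX : X -> R)
    (l : A -> X -> X) (r : X -> A -> X) (D : A -> X -> R[i]) : Prop :=
  exists (I : Type) (le : I -> I -> Prop) (xi eta : I -> X -> R[i]),
    [/\ directed le,
        (forall i, in_dual nrmX (xi i) /\ in_dual nrmX (eta i)),
        (forall a, forall e : R, 0 < e -> exists i0, forall i, le i0 i ->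
            dual_norm_le nrmX (fun x => D a x - dual_ad l r (xi i) (eta i) a x) e) &
        (exists M : R, forall i a,
            dual_norm_le nrmX (dual_ad l r (xi i) (eta i) a) (M * nrmA a))].

Definition approx_semi_amenable (R : realType) (A : lmodType R[i])
    (mul : A -> A -> A) (nrmA : A -> R) : Prop :=
  forall (X : lmodType R[i]) (nrmX : X -> R) (l : A -> X -> X) (r : X -> A -> X),
    banach_bimodule mul nrmA nrmX l r ->
    forall D : A -> X -> R[i], cont_dual_derivation mul nrmA nrmX l r D ->
      dual_approx_semi_inner nrmA nrmX l r D.

Definition bdd_approx_semi_amenable (R : realType) (A : lmodType R[i])
    (mul : A -> A -> A) (nrmA : A -> R) : Prop :=
  forall (X : lmodType R[i]) (nrmX : X -> R) (l : A -> X -> X) (r : X -> A -> X),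
    banach_bimodule mul nrmA nrmX l r ->
    forall D : A -> X -> R[i], cont_dual_derivation mul nrmA nrmX l r D ->
      dual_bdd_approx_semi_inner nrmA nrmX l r D.

Definition central_mb_approx_identity (R : realType) (A : lmodType R[i])
    (mul : A -> A -> A) (nrm : A -> R) : Prop :=
  exists (I : Type) (le : I -> I -> Prop) (e : I -> A),
    [/\ directed le,
        (forall i a, mul (e i) a = mul a (e i)),
        (forall a, forall eps : R, 0 < eps -> exists i0, forall i, le i0 i ->
            nrm (mul (e i) a - a) < eps) &
        (exists M : R, forall i a, nrm (mul (e i) a) <= M * nrm a)].

(* Main.v *)
From HB Require Import structures.
Require Import Defs.
From mathcomp Require Import all_boot all_algebra.
From mathcomp Require Import reals complex.
From mathcomp Require Import lra ring.
From mathcomp Require all_classical topology normedtype sequences.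
Module RC.
Import all_classical topology normedtype sequences.
Import GRing.Theory Num.Theory numFieldNormedType.Exports.
Local Open Scope ring_scope.
Local Open Scope classical_set_scope.
Lemma R_complete (R : realType) (u : nat -> R) :
  (forall e : R, 0 < e -> exists N : nat, forall m n : nat, (N <= m)%N -> (N <= n)%N -> `|u m - u n| < e) ->
  exists l : R, forall e : R, 0 < e -> exists N : nat, forall n : nat, (N <= n)%N -> `|u n - l| < e.
Proof.
move=> Hc.
have : cauchy (u @ \oo).
  apply: cauchy_exP => e e0.
  have [N HN] := Hc e e0.
  exists (u N); exists N => // n /= Nn.
  by rewrite /ball /= HN.
move/cauchy_cvg => /cvg_ex [l Hl].
exists l => e e0.
move/cvgrPdist_lt : Hl => /(_ e e0) [N _ HN].
exists N => n Nn; rewrite distrC; exact: HN.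
Qed.
End RC.
Module InfL.
Import all_classical.
Import GRing.Theory Num.Theory.
Local Open Scope ring_scope.
Local Open Scope classical_set_scope.
Lemma inf_props (R : realType) (S : set R) : (exists M, S M) -> (forall M, S M -> 0 <= M) ->
  [/\ 0 <= inf S, (forall M, S M -> inf S <= M) &
      (forall e, 0 < e -> exists M, S M /\ M < inf S + e)].
Proof.
move=> [M0 SM0] Hpos.
have hl : has_lbound S by exists 0 => y /Hpos.
split.
- by apply: lb_le_inf; [exists M0 | move=> y /Hpos].
- by move=> M SM; apply: ge_inf.
- move=> e e0; have [M SM lt] := @inf_adherent R S e e0 (conj (ex_intro _ M0 SM0) hl).
  by exists M.
Qed.
End InfL.

Import mathcomp.order.order.Order.TTheory GRing.Theory Num.Theory.
Local Open Scope ring_scope.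
Local Open Scope complex_scope.
Set Implicit Arguments. Unset Strict Implicit. Unset Printing Implicit Defensive.

Section CN.
Variable R : realType.
Definition cn (z : R[i]) : R := ComplexField.Normc.normc z.
Lemma cnE (z : R[i]) : `|z| = (cn z)%:C.
Proof. by case: z => a b; rewrite normc_def. Qed.
Lemma leC (z : R[i]) (c : R) : (`|z| <= c%:C) = (cn z <= c).
Proof. by rewrite cnE lecR. Qed.
Lemma cn_ge0 z : 0 <= cn z.
Proof. by rewrite /cn /ComplexField.Normc.normc; case: z => a b; apply: sqrtr_ge0. Qed.
Lemma cnD z w : cn (z + w) <= cn z + cn w.
Proof. exact: le_normcD. Qed.
Lemma cnM z w : cn (z * w) = cn z * cn w.
Proof. exact: ComplexField.Normc.normcM. Qed.
Lemma cnN z : cn (- z) = cn z.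
Proof. exact: normcN. Qed.
Lemma cn0 : cn 0 = 0.
Proof. exact: ComplexField.Normc.normc0. Qed.
Lemma cn_eq0 z : cn z = 0 -> z = 0.
Proof. exact: ComplexField.Normc.eq0_normc. Qed.

Lemma cnR (a : R) : cn a%:C = `|a|.
Proof. by rewrite /cn /= expr0n /= addr0 sqrtr_sqr. Qed.
Lemma cn1 : cn 1 = 1.
Proof. exact: ComplexField.Normc.normc1. Qed.
Lemma cnB z w : cn (z - w) <= cn z + cn w.
Proof. by rewrite -(cnN w) cnD. Qed.
Lemma cnC z w : cn (z - w) = cn (w - z).
Proof. by rewrite -cnN opprB. Qed.
Lemma cn_tri z w u : cn (z - u) <= cn (z - w) + cn (w - u).
Proof. by rewrite (_ : z - u = (z - w) + (w - u)) ?cnD // addrA addrNK. Qed.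
Lemma cn_Re z : `|complex.Re z| <= cn z.
Proof.
case: z => a b; rewrite /cn /= -sqrtr_sqr ler_wsqrtr //.
by rewrite lerDl sqr_ge0.
Qed.
Lemma cn_Im z : `|complex.Im z| <= cn z.
Proof.
case: z => a b; rewrite /cn /= -sqrtr_sqr ler_wsqrtr //.
by rewrite lerDr sqr_ge0.
Qed.
Lemma cn_le_ReIm z : cn z <= `|complex.Re z| + `|complex.Im z|.
Proof.
case: z => a b; rewrite /cn /ComplexField.Normc.normc /=.
have h : 0 <= `|a| + `|b| by rewrite addr_ge0.
rewrite -(ger0_norm h) -sqrtr_sqr; apply: ler_wsqrtr.
rewrite sqrrD -(real_normK (num_real a)) -(real_normK (num_real b)).
rewrite -addrA lerD2l -[X in X <= _]add0r lerD2r.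
by apply: mulrn_wge0; apply: mulr_ge0.
Qed.
Lemma real_small (x : R) : (forall e : R, 0 < e -> x <= e) -> x <= 0.
Proof.
move=> h; rewrite leNgt; apply/negP => x0.
have := h (x / 2) (divr_gt0 x0 (ltr0Sn _ 1)).
lra.
Qed.
Lemma cn_small z : (forall e : R, 0 < e -> cn z <= e) -> z = 0.
Proof.
move=> h; apply: cn_eq0; apply: le_anti; rewrite cn_ge0 andbT.
exact: real_small.
Qed.

Lemma ReB (z w : R[i]) : complex.Re (z - w) = complex.Re z - complex.Re w.
Proof. by case: z => ? ?; case: w => ? ?. Qed.
Lemma ImB (z w : R[i]) : complex.Im (z - w) = complex.Im z - complex.Im w.
Proof. by case: z => ? ?; case: w => ? ?. Qed.
Lemma C_complete (u : nat -> R[i]) :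
  (forall e : R, 0 < e -> exists N : nat, forall m n : nat, (N <= m)%N -> (N <= n)%N -> cn (u m - u n) < e) ->
  exists l, forall e : R, 0 < e -> exists N : nat, forall n : nat, (N <= n)%N -> cn (u n - l) < e.
Proof.
move=> Hc.
have [a Ha] : exists a, forall e : R, 0 < e -> exists N : nat, forall n : nat, (N <= n)%N -> `|complex.Re (u n) - a| < e.
  apply: RC.R_complete => e e0; have [N HN] := Hc e e0; exists N => m n Nm Nn.
  apply: le_lt_trans (HN m n Nm Nn); rewrite -ReB; exact: cn_Re.
have [b Hb] : exists b, forall e : R, 0 < e -> exists N : nat, forall n : nat, (N <= n)%N -> `|complex.Im (u n) - b| < e.
  apply: RC.R_complete => e e0; have [N HN] := Hc e e0; exists N => m n Nm Nn.
  apply: le_lt_trans (HN m n Nm Nn); rewrite -ImB; exact: cn_Im.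
exists (a +i* b) => e e0.
have e20 : 0 < e / 2 by rewrite divr_gt0.
have [N1 H1] := Ha _ e20; have [N2 H2] := Hb _ e20.
exists (maxn N1 N2) => n Nn.
apply: le_lt_trans (cn_le_ReIm _) _.
have h1 := H1 n (leq_trans (leq_maxl _ _) Nn).
have h2 := H2 n (leq_trans (leq_maxr _ _) Nn).
rewrite ReB ImB /=.
rewrite (splitr e); exact: ltrD.
Qed.
End CN.

Section NormFacts.
Variables (R : realType) (V : lmodType R[i]) (nrm : V -> R).
Hypothesis Hn : is_norm nrm.
Lemma nrm_ge0 x : 0 <= nrm x. Proof. by case: Hn => h _ _ _; apply: h. Qed.
Lemma nrmZ (k : R[i]) x : nrm (k *: x) = cn k * nrm x.
Proof.
case: Hn => _ _ _ h; apply: complexI; rewrite h cnE.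
by rewrite -(rmorphM (real_complex R)).
Qed.
Lemma nrm0 : nrm 0 = 0.
Proof. by rewrite -(scale0r (0 : V)) nrmZ cn0 mul0r. Qed.
Lemma nrmN x : nrm (- x) = nrm x.
Proof. by rewrite -scaleN1r nrmZ cnN cn1 mul1r. Qed.
Lemma nrmD x y : nrm (x + y) <= nrm x + nrm y. Proof. by case: Hn => _ _ h _; apply: h. Qed.
Lemma nrmB x y : nrm (x - y) <= nrm x + nrm y.
Proof. by rewrite -(nrmN y) nrmD. Qed.
Lemma nrm_eq0 x : nrm x = 0 -> x = 0. Proof. by case: Hn => _ h _ _; apply: h. Qed.
End NormFacts.

Section DualFacts.
Variables (R : realType) (V : lmodType R[i]) (nrm : V -> R).
Hypothesis Hn : is_norm nrm.
Definition bnd (f : V -> R[i]) (M : R) := forall x, cn (f x) <= M * nrm x.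
Lemma in_dual_lin f : in_dual nrm f -> forall (k : R[i]) x y, f (k *: x + y) = k * f x + f y.
Proof. by case=> h _; apply: h. Qed.
Lemma in_dual0 f : in_dual nrm f -> f 0 = 0.
Proof.
move=> /in_dual_lin h; have := h 1 0 0.
rewrite scale1r addr0 mul1r => e; apply: (@addrI _ (f 0)); by rewrite addr0 -e.
Qed.
Lemma in_dualD f : in_dual nrm f -> forall x y, f (x + y) = f x + f y.
Proof. by move=> /in_dual_lin h x y; rewrite -[x]scale1r h mul1r scale1r. Qed.
Lemma in_dualZ f : in_dual nrm f -> forall k x, f (k *: x) = k * f x.
Proof. by move=> hf k x; rewrite -[k *: x]addr0 (in_dual_lin hf) (in_dual0 hf) addr0. Qed.
Lemma in_dualN f : in_dual nrm f -> forall x, f (- x) = - f x.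
Proof. by move=> hf x; rewrite -scaleN1r (in_dualZ hf) mulN1r. Qed.
Lemma in_dualB f : in_dual nrm f -> forall x y, f (x - y) = f x - f y.
Proof. by move=> hf x y; rewrite (in_dualD hf) (in_dualN hf). Qed.
Lemma in_dual_bnd f : in_dual nrm f -> exists2 M, 0 <= M & bnd f M.
Proof.
case=> _ [M HM]; exists `|M|; first exact: normr_ge0.
move=> x; have := HM x; rewrite leC => h; apply: (le_trans h).
by rewrite ler_wpM2r ?(nrm_ge0 Hn) // ler_norm.
Qed.
Lemma bnd_in_dual f M : (forall (k : R[i]) x y, f (k *: x + y) = k * f x + f y) -> bnd f M -> in_dual nrm f.
Proof. by move=> hl hb; split=> //; exists M => x; rewrite leC. Qed.
Lemma dnle_bnd f c : dual_norm_le nrm f c <-> bnd f c.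
Proof. by split=> h x; [rewrite -leC | rewrite leC]. Qed.
End DualFacts.

Section DualSpace.
Variables (R : realType) (V : lmodType R[i]) (nrm : V -> R).
Hypothesis Hn : is_norm nrm.

Lemma in_dual_0 : in_dual nrm (fun _ => 0).
Proof.
apply: (bnd_in_dual (M:=0)) => [k x y|x]; first by rewrite mulr0 addr0.
by rewrite cn0 mul0r.
Qed.
Lemma in_dual_add f g : in_dual nrm f -> in_dual nrm g -> in_dual nrm (fun x => f x + g x).
Proof.
move=> hf hg; have [_ [Mf bf]] := hf; have [_ [Mg bg]] := hg.
apply: (bnd_in_dual (M:=Mf + Mg)) => [k x y|x].
  by rewrite (in_dual_lin hf) (in_dual_lin hg) mulrDr addrACA.
by apply: le_trans (cnD _ _) _; rewrite mulrDl lerD // -leC.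
Qed.
Lemma in_dual_scale (c : R[i]) f : in_dual nrm f -> in_dual nrm (fun x => c * f x).
Proof.
move=> hf; have [_ [Mf bf]] := hf.
apply: (bnd_in_dual (M:=cn c * Mf)) => [k x y|x].
  by rewrite (in_dual_lin hf) mulrDr mulrCA.
by rewrite cnM -mulrA ler_wpM2l ?cn_ge0 // -leC.
Qed.
Lemma in_dual_opp f : in_dual nrm f -> in_dual nrm (fun x => - f x).
Proof.
move=> hf; have := in_dual_scale (-1) hf.
by congr in_dual; apply: boolp.funext => x; rewrite mulN1r.
Qed.
Lemma in_dual_sub f g : in_dual nrm f -> in_dual nrm g -> in_dual nrm (fun x => f x - g x).
Proof. by move=> hf hg; apply: in_dual_add => //; apply: in_dual_opp. Qed.

Record dualT := DualT { dfun :> V -> R[i]; dfunP : in_dual nrm dfun }.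
HB.instance Definition _ := boolp.gen_eqMixin dualT.
HB.instance Definition _ := boolp.gen_choiceMixin dualT.

Lemma dual_ext (f g : dualT) : (forall x, f x = g x) -> f = g.
Proof.
case: f => f hf; case: g => g hg /= h.
have e : f = g by apply: boolp.funext.
subst g; congr DualT; exact: boolp.Prop_irrelevance.
Qed.

Definition d0 := DualT in_dual_0.
Definition dadd (f g : dualT) := DualT (in_dual_add (dfunP f) (dfunP g)).
Definition dopp (f : dualT) := DualT (in_dual_opp (dfunP f)).
Definition dscale (c : R[i]) (f : dualT) := DualT (in_dual_scale c (dfunP f)).

Lemma daddA : associative dadd.
Proof. by move=> f g h; apply: dual_ext => x /=; rewrite addrA. Qed.
Lemma daddC : commutative dadd.
Proof. by move=> f g; apply: dual_ext => x /=; rewrite addrC. Qed.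
Lemma dadd0 : left_id d0 dadd.
Proof. by move=> f; apply: dual_ext => x /=; rewrite add0r. Qed.
Lemma daddN : left_inverse d0 dopp dadd.
Proof. by move=> f; apply: dual_ext => x /=; rewrite addNr. Qed.
HB.instance Definition _ := GRing.isZmodule.Build dualT daddA daddC dadd0 daddN.

Lemma dscaleA a b v : dscale a (dscale b v) = dscale (a * b) v.
Proof. by apply: dual_ext => x /=; rewrite mulrA. Qed.
Lemma dscale1 : left_id 1 dscale.
Proof. by move=> f; apply: dual_ext => x /=; rewrite mul1r. Qed.
Lemma dscaleDr : right_distributive dscale +%R.
Proof. by move=> a f g; apply: dual_ext => x /=; rewrite mulrDr. Qed.
Lemma dscaleDl v : {morph dscale^~ v: a b / a + b}.
Proof. by move=> a b; apply: dual_ext => x /=; rewrite mulrDl. Qed.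
HB.instance Definition _ := GRing.Zmodule_isLmodule.Build R[i] dualT dscaleA dscale1 dscaleDr dscaleDl.

Lemma dualE0 x : (0 : dualT) x = 0. Proof. by []. Qed.
Lemma dualED (f g : dualT) x : (f + g) x = f x + g x. Proof. by []. Qed.
Lemma dualEN (f : dualT) x : (- f) x = - f x. Proof. by []. Qed.
Lemma dualEB (f g : dualT) x : (f - g) x = f x - g x. Proof. by []. Qed.
Lemma dualEZ c (f : dualT) x : (c *: f) x = c * f x. Proof. by []. Qed.

End DualSpace.

Section Small.
Variable R : realType.
Lemma small_mul (x n : R) : 0 <= n -> (forall e : R, 0 < e -> x <= e * n) -> x <= 0.
Proof.
move=> n0 h; apply: real_small => e e0.
have n1 : 0 < n + 1 by rewrite ltr_wpDl.
apply: le_trans (h (e / (n + 1)) (divr_gt0 e0 n1)) _.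
rewrite mulrAC ler_pdivrMr // ler_pM2l //; lra.
Qed.
Definition cvgC (z : nat -> R[i]) l := forall e : R, 0 < e -> exists N : nat, forall n, (N <= n)%N -> cn (z n - l) < e.
Lemma cvgC_le (z : nat -> R[i]) l (c : R) : cvgC z l -> (exists N, forall n, (N <= n)%N -> cn (z n) <= c) -> cn l <= c.
Proof.
move=> hz [N hN]; rewrite -subr_le0; apply: real_small => e e0.
have [N1 h1] := hz e e0; pose n := maxn N N1.
have := h1 n (leq_maxr _ _); have := hN n (leq_maxl _ _).
have := cn_tri l (z n) 0; rewrite !subr0 cnC => t a b; lra.
Qed.
Lemma cvgC_lin (k : R[i]) a b c A B C : cvgC a A -> cvgC b B -> cvgC c C ->
  (forall n, c n = k * a n + b n) -> C = k * A + B.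
Proof.
move=> ha hb hc hn; apply/eqP; rewrite -subr_eq0; apply/eqP; apply: cn_small => e e0.
have e3 : 0 < e / 3 by rewrite divr_gt0.
have ek : 0 < e / 3 / (cn k + 1) by rewrite divr_gt0 // ltr_wpDl ?cn_ge0.
have [N1 h1] := ha _ ek; have [N2 h2] := hb _ e3; have [N3 h3] := hc _ e3.
pose n := maxn N1 (maxn N2 N3).
have n1 : (N1 <= n)%N by rewrite leq_maxl.
have n2 : (N2 <= n)%N by rewrite /n (leq_trans (leq_maxl N2 N3)) // leq_maxr.
have n3 : (N3 <= n)%N by rewrite /n (leq_trans (leq_maxr N2 N3)) // leq_maxr.
have := h1 n n1; have := h2 n n2; have := h3 n n3.
have -> : C - (k * A + B) = - (c n - C) + k * (a n - A) + (b n - B).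
  by rewrite hn; ring.
move=> t3 t2 t1.
apply: le_trans (cnD _ _) _; apply: le_trans (lerD (cnD _ _) (lexx _)) _.
rewrite cnN cnM.
have : cn k * cn (a n - A) <= e / 3.
  have kp : 0 <= cn k := cn_ge0 k.
  apply: le_trans (ler_wpM2l kp (ltW t1)) _.
  have hq : cn k / (cn k + 1) <= 1 by rewrite ler_pdivrMr ?ltr_wpDl ?cn_ge0 // mul1r lerDl.
  rewrite mulrA [cn k * (e / 3)]mulrC -mulrA.
  by rewrite ler_piMr // ltW.
lra.
Qed.
End Small.

Section DualNorm.
Variables (R : realType) (V : lmodType R[i]) (nrm : V -> R).
Hypothesis Hn : is_norm nrm.
Local Notation W := (dualT nrm).

Definition dset (f : W) : R -> Prop := fun M => 0 <= M /\ bnd nrm f M.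
Definition dnorm (f : W) : R := inf (dset f).

Lemma dset_props (f : W) : [/\ 0 <= dnorm f, (forall M, dset f M -> dnorm f <= M) &
      (forall e, 0 < e -> exists M, dset f M /\ M < dnorm f + e)].
Proof.
apply: InfL.inf_props; last by move=> M [].
have [M M0 hM] := in_dual_bnd Hn (dfunP f); by exists M.
Qed.
Lemma dnorm_ge0 (f : W) : 0 <= dnorm f. Proof. by case: (dset_props f). Qed.
Lemma dnorm_le (f : W) M : 0 <= M -> bnd nrm f M -> dnorm f <= M.
Proof. by move=> M0 hM; case: (dset_props f) => _ h _; apply: h. Qed.
Lemma dnorm_bnd (f : W) : bnd nrm f (dnorm f).
Proof.
move=> x; rewrite -subr_le0; apply: (small_mul (nrm_ge0 Hn x)) => e e0.
case: (dset_props f) => _ _ /(_ e e0) [M [[_ hM] lt]].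
have := hM x; have := nrm_ge0 Hn x => n0 h.
have : M * nrm x <= (dnorm f + e) * nrm x by rewrite ler_wpM2r // ltW.
nra.
Qed.

Lemma dnorm_is_norm : is_norm dnorm.
Proof.
split.
- exact: dnorm_ge0.
- move=> f h; apply: dual_ext => x; rewrite dualE0.
  apply: cn_eq0; apply: le_anti; rewrite cn_ge0 andbT.
  by have := dnorm_bnd f x; rewrite h mul0r.
- move=> f g; apply: dnorm_le; first by rewrite addr_ge0 ?dnorm_ge0.
  move=> x; rewrite dualED; apply: le_trans (cnD _ _) _; rewrite mulrDl.
  by rewrite lerD ?dnorm_bnd.
- move=> k f; rewrite cnE -(rmorphM (real_complex R)); congr (_%:C).
  apply: le_anti; apply/andP; split.
    apply: dnorm_le; first by rewrite mulr_ge0 ?cn_ge0 ?dnorm_ge0.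
    by move=> x; rewrite dualEZ cnM -mulrA ler_wpM2l ?cn_ge0 ?dnorm_bnd.
  have [->|k0] := eqVneq k 0; first by rewrite cn0 mul0r dnorm_ge0.
  have ck : 0 < cn k by rewrite lt_def cn_ge0 andbT; apply/eqP => /cn_eq0/eqP; rewrite (negPf k0).
  rewrite -ler_pdivlMl //; apply: dnorm_le; first by rewrite mulr_ge0 ?invr_ge0 ?dnorm_ge0 ?cn_ge0.
  move=> x; rewrite -mulrA ler_pdivlMl // -cnM.
  by have := dnorm_bnd (k *: f) x; rewrite dualEZ.
Qed.

Lemma dnorm_complete : complete_norm dnorm.
Proof.
move=> u Hc.
have cx : forall x, exists l, cvgC (fun n => u n x) l.
  move=> x; apply: C_complete => e e0.
  have e1 : 0 < e / (nrm x + 1) by rewrite divr_gt0 // ltr_wpDl ?(nrm_ge0 Hn).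
  have [N HN] := Hc _ e1; exists N => m n Nm Nn.
  have := dnorm_bnd (u m - u n) x; rewrite dualEB => h.
  apply: le_lt_trans h _.
  have hx : 0 <= nrm x := nrm_ge0 Hn x.
  have := HN m n Nm Nn => lt.
  apply: le_lt_trans (ler_wpM2r hx (ltW lt)) _.
  rewrite mulrAC ltr_pdivrMr ?ltr_wpDl // ltr_pM2l //; lra.
have [L HL] := boolp.choice cx.
have Llin : forall (k : R[i]) x y, L (k *: x + y) = k * L x + L y.
  move=> k x y; apply: (cvgC_lin (HL x) (HL y) (HL (k *: x + y))) => n.
  exact: (in_dual_lin (dfunP (u n))).
have [N0 HN0] := Hc 1 ltr01.
have Lbnd : bnd nrm L (dnorm (u N0) + 1).
  move=> x; apply: (cvgC_le (HL x)); exists N0 => n Nn.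
  apply: le_trans (dnorm_bnd (u n) x) _; rewrite ler_wpM2r ?(nrm_ge0 Hn) //.
  have := HN0 n N0 Nn (leqnn _).
  have := (dnorm_is_norm).
  case=> _ _ tri _; have := tri (u n - u N0) (u N0); rewrite subrK => t1 t2; lra.
pose l := DualT (bnd_in_dual Llin Lbnd).
exists l => e e0.
have e2 : 0 < e / 2 by rewrite divr_gt0.
have [N HN] := Hc _ e2; exists N => n Nn.
apply: le_lt_trans (_ : dnorm (u n - l) <= e / 2) _; last by rewrite ltr_pdivrMr // ltr_pMr // ltr1n.
apply: dnorm_le; first exact: ltW.
move=> x; rewrite dualEB /=.
have hl : cvgC (fun m => u n x - u m x) (u n x - L x).
  move=> e' e'0; have [N' HN'] := HL x e' e'0; exists N' => m Nm.
  by rewrite (_ : u n x - u m x - (u n x - L x) = - (u m x - L x)) ?cnN ?HN' //; ring.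
apply: (cvgC_le hl); exists N => m Nm.
have := dnorm_bnd (u n - u m) x; rewrite dualEB => h; apply: le_trans h _.
by rewrite ler_wpM2r ?(nrm_ge0 Hn) // ltW // HN.
Qed.

Lemma dnorm_banach : banach_space dnorm.
Proof. split; [exact: dnorm_is_norm | exact: dnorm_complete]. Qed.
End DualNorm.

Section Nets.
Variable R : realType.
Lemma net_fin (I : Type) (le : I -> I -> Prop) (T : Type) (P : T -> I -> Prop) :
  directed le -> (forall a, exists i0, forall i, le i0 i -> P a i) ->
  forall L : seq T, exists i0, forall i, le i0 i -> forall a, List.In a L -> P a i.
Proof.
case=> [[i0]] _ tr up h; elim=> [|a L [j hj]]; first by exists i0.
have [k hk] := h a; have [m [m1 m2]] := up j k.
exists m => i mi b /= [<-|bL]; first exact: hk (tr _ _ _ m2 mi).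
exact: hj _ (tr _ _ _ m1 mi) _ bL.
Qed.
End Nets.

Section AlgFacts.
Variables (R : realType) (A : lmodType R[i]) (mul : A -> A -> A) (nrm : A -> R).
Hypothesis HA : banach_algebra mul nrm.
Lemma alg_norm : is_norm nrm. Proof. by case: HA => [[]]. Qed.
Lemma mulDl a b c : mul (a + b) c = mul a c + mul b c. Proof. by case: HA => _ _ [h _] _ _; apply: h. Qed.
Lemma mulDr a b c : mul a (b + c) = mul a b + mul a c. Proof. by case: HA => _ _ [_ h] _ _; apply: h. Qed.
Lemma mulZl k a b : mul (k *: a) b = k *: mul a b. Proof. by case: HA => _ _ _ [h _] _; apply: h. Qed.
Lemma mulZr k a b : mul a (k *: b) = k *: mul a b. Proof. by case: HA => _ _ _ [_ h] _; apply: h. Qed.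
Lemma mulA a b c : mul a (mul b c) = mul (mul a b) c. Proof. by case: HA => _ h _ _ _; apply: h. Qed.
Lemma mul_nrm a b : nrm (mul a b) <= nrm a * nrm b. Proof. by case: HA => _ _ _ _ h; apply: h. Qed.
Lemma mul0l b : mul 0 b = 0.
Proof. by rewrite -[X in mul X b](scale0r (0 : A)) mulZl scale0r. Qed.
Lemma mul0r a : mul a 0 = 0.
Proof. by rewrite -[X in mul a X](scale0r (0 : A)) mulZr scale0r. Qed.
Lemma mulNl a b : mul (- a) b = - mul a b.
Proof. by rewrite -scaleN1r mulZl scaleN1r. Qed.
Lemma mulBl a b c : mul (a - b) c = mul a c - mul b c.
Proof. by rewrite mulDl mulNl. Qed.
Lemma mul_linr a (k : R[i]) x y : mul a (k *: x + y) = k *: mul a x + mul a y.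
Proof. by rewrite mulDr mulZr. Qed.
Lemma mul_linl a (k : R[i]) x y : mul (k *: x + y) a = k *: mul x a + mul y a.
Proof. by rewrite mulDl mulZl. Qed.
End AlgFacts.

Section RightUnit.
Variables (R : realType) (A : lmodType R[i]) (mul : A -> A -> A) (nrm : A -> R).
Hypothesis HA : banach_algebra mul nrm.
Local Notation Hn := (alg_norm HA).
Local Notation W := (dualT nrm).
Local Notation dn := (@dnorm R A nrm).

Lemma ract_in (g : W) (a : A) : in_dual nrm (fun y => g (mul a y)).
Proof.
apply: (bnd_in_dual (M := dn g * nrm a)) => [k x y|y].
  by rewrite (mul_linr HA) (in_dual_lin (dfunP g)).
apply: le_trans (dnorm_bnd Hn g _) _; rewrite -mulrA ler_wpM2l ?(dnorm_ge0 Hn) //.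
exact: (mul_nrm HA).
Qed.
Lemma lact_in (g : W) (a : A) : in_dual nrm (fun y => g (mul y a)).
Proof.
apply: (bnd_in_dual (M := dn g * nrm a)) => [k x y|y].
  by rewrite (mul_linl HA) (in_dual_lin (dfunP g)).
apply: le_trans (dnorm_bnd Hn g _) _; rewrite -mulrA ler_wpM2l ?(dnorm_ge0 Hn) //.
by apply: le_trans (mul_nrm HA y a) _; rewrite mulrC.
Qed.
Definition ractW (g : W) (a : A) : W := DualT (ract_in g a).
Definition lactW (a : A) (g : W) : W := DualT (lact_in g a).
Definition zl (a : A) (g : W) : W := 0.
Definition zr (g : W) (a : A) : W := 0.

Lemma dn0 : dn 0 = 0.
Proof. exact: (nrm0 (dnorm_is_norm Hn)). Qed.

Lemma bimod1 : banach_bimodule mul nrm dn zl ractW.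
Proof.
split.
- exact: (dnorm_banach Hn).
- by split=> *; rewrite /zl ?scaler0 ?addr0.
- split=> [k a x y|k a b x]; apply: dual_ext => z /=.
    by [].
  by rewrite (mul_linl HA) (in_dual_lin (dfunP x)).
- split=> [a b x|a b x|a b x]; rewrite /zl //.
    by apply: dual_ext => z /=; rewrite (mulA HA).
  by apply: dual_ext.
- split=> [a x|a x]; first by rewrite /zl dn0; apply: mulr_ge0; [apply: (nrm_ge0 Hn) | apply: (dnorm_ge0 Hn)].
  apply: (dnorm_le Hn); first by apply: mulr_ge0; [apply: (dnorm_ge0 Hn) | apply: (nrm_ge0 Hn)].
  by move=> y /=; apply: le_trans (dnorm_bnd Hn x _) _; rewrite -mulrA ler_wpM2l ?(dnorm_ge0 Hn) // (mul_nrm HA).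
Qed.
End RightUnit.


Section RightUnit2.
Variables (R : realType) (A : lmodType R[i]) (mul : A -> A -> A) (nrm : A -> R).
Hypothesis HA : banach_algebra mul nrm.
Local Notation Hn := (alg_norm HA).
Local Notation W := (dualT nrm).
Local Notation dn := (@dnorm R A nrm).

Lemma bimod2 : banach_bimodule mul nrm dn (lactW HA) (@zr R A nrm).
Proof.
split.
- exact: (dnorm_banach Hn).
- split=> [k a x y|k a b x]; apply: dual_ext => z /=.
    by [].
  by rewrite (mul_linr HA) (in_dual_lin (dfunP x)).
- by split=> *; rewrite /zr scaler0 addr0.
- split=> [a b x|a b x|a b x]; rewrite /zr //.
    by apply: dual_ext => z /=; rewrite (mulA HA).
  by apply: dual_ext.
- split=> [a x|a x]; last first.
    by rewrite /zr (dn0 HA); apply: mulr_ge0; [apply: (dnorm_ge0 Hn) | apply: (nrm_ge0 Hn)].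
  apply: (dnorm_le Hn); first by apply: mulr_ge0; [apply: (nrm_ge0 Hn) | apply: (dnorm_ge0 Hn)].
  move=> y /=; apply: le_trans (dnorm_bnd Hn x _) _.
  rewrite [nrm a * _]mulrC -mulrA ler_wpM2l ?(dnorm_ge0 Hn) // mulrC (mul_nrm HA) //.
Qed.

Definition De (a : A) : W -> R[i] := fun g => g a.

Lemma De_in a : in_dual dn (De a).
Proof.
apply: (bnd_in_dual (M := nrm a)) => [k x y|g]; first by [].
by rewrite /De mulrC; apply: (dnorm_bnd Hn).
Qed.

Lemma De_bnd a : dual_norm_le dn (De a) (1 * nrm a).
Proof. by apply/dnle_bnd => g; rewrite mul1r /De mulrC; apply: (dnorm_bnd Hn). Qed.

Lemma deriv1 : cont_dual_derivation mul nrm dn (@zl R A nrm) (ractW HA) De.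
Proof.
split.
- exact: De_in.
- by move=> k a b x; rewrite /De (in_dual_lin (dfunP x)).
- by move=> a b x; rewrite /dual_lact /dual_ract /De /= addr0.
- by exists 1 => a; apply: De_bnd.
Qed.

Lemma deriv2 : cont_dual_derivation mul nrm dn (lactW HA) (@zr R A nrm) De.
Proof.
split.
- exact: De_in.
- by move=> k a b x; rewrite /De (in_dual_lin (dfunP x)).
- by move=> a b x; rewrite /dual_lact /dual_ract /De /= add0r.
- by exists 1 => a; apply: De_bnd.
Qed.

Lemma right_approx (HS : approx_semi_amenable mul nrm) (L : seq A) (e : R) : 0 < e ->
  exists F : W -> R[i], in_dual dn F /\
    forall a, List.In a L -> forall g : W, cn (g a - F (ractW HA g a)) <= e * dn g.
Proof.
move=> e0.
have [I [le [xi [eta [dir hin hconv]]]]] := HS W dn (@zl R A nrm) (ractW HA) (bimod1 HA) De deriv1.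
have [i0 hi0] := net_fin dir (fun a => hconv a e e0) L.
have lei : le i0 i0 by case: dir => _ h _ _; apply: h.
exists (xi i0); split; first by case: (hin i0).
move=> a aL g; have := hi0 i0 lei a aL; move/dnle_bnd => /(_ g).
rewrite /dual_ad /dual_lact /dual_ract /De /zl.
by rewrite (in_dual0 (proj2 (hin i0))) subr0.
Qed.

Lemma left_approx (HS : approx_semi_amenable mul nrm) (L : seq A) (e : R) : 0 < e ->
  exists G : W -> R[i], in_dual dn G /\
    forall a, List.In a L -> forall g : W, cn (g a - G (lactW HA a g)) <= e * dn g.
Proof.
move=> e0.
have [I [le [xi [eta [dir hin hconv]]]]] := HS W dn (lactW HA) (@zr R A nrm) bimod2 De deriv2.
have [i0 hi0] := net_fin dir (fun a => hconv a e e0) L.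
have lei : le i0 i0 by case: dir => _ h _ _; apply: h.
exists (fun g => - eta i0 g); split; first by case: (hin i0) => _ h; apply: (in_dual_opp h).
move=> a aL g; have := hi0 i0 lei a aL; move/dnle_bnd => /(_ g).
rewrite /dual_ad /dual_lact /dual_ract /De /zr.
by rewrite (in_dual0 (proj1 (hin i0))) sub0r.
Qed.
End RightUnit2.


Section Extend.
Variables (R : realType) (A : lmodType R[i]) (mul : A -> A -> A) (nrm : A -> R).
Hypothesis HA : banach_algebra mul nrm.
Hypothesis HS : approx_semi_amenable mul nrm.
Local Notation Hn := (alg_norm HA).
Local Notation W := (dualT nrm).
Local Notation dn := (@dnorm R A nrm).
Variables (X : lmodType R[i]) (nrmX : X -> R).
Hypothesis HX : is_norm nrmX.

Section Right.
Variable rX : X -> A -> X.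
Hypothesis hr1 : forall (k : R[i]) a x y, rX (k *: x + y) a = k *: rX x a + rX y a.
Hypothesis hr2 : forall (k : R[i]) a b x, rX x (k *: a + b) = k *: rX x a + rX x b.
Hypothesis hr3 : forall a b x, rX x (mul a b) = rX (rX x a) b.
Hypothesis hr4 : forall a x, nrmX (rX x a) <= nrmX x * nrm a.

Lemma right_extend (xi : X -> R[i]) (hxi : in_dual nrmX xi) (L : seq A) (e : R) : 0 < e ->
  exists Xi : X -> R[i], [/\ in_dual nrmX Xi,
    (forall a, List.In a L -> forall x, cn (xi (rX x a) - Xi (rX x a)) <= e * nrmX x) &
    (forall x, (forall y, xi (rX x y) = 0) -> Xi x = 0)].
Proof.
move=> e0.
have [M M0 bM] := in_dual_bnd HX hxi.
have gin : forall x, in_dual nrm (fun y => xi (rX x y)).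
  move=> x; apply: (bnd_in_dual (M := M * nrmX x)) => [k a b|y].
    by rewrite hr2 (in_dual_lin hxi).
  apply: le_trans (bM _) _; rewrite -mulrA ler_wpM2l //; exact: hr4.
pose gx x : W := DualT (gin x).
have gxn : forall x, dn (gx x) <= M * nrmX x.
  move=> x; apply: (dnorm_le Hn); first by rewrite mulr_ge0 // (nrm_ge0 HX).
  by move=> y /=; apply: le_trans (bM _) _; rewrite -mulrA ler_wpM2l //; exact: hr4.
have e1 : 0 < e / (M + 1) by rewrite divr_gt0 // ltr_wpDl.
have [F [hF hFa]] := right_approx HA HS L e1.
have [MF MF0 bF] := in_dual_bnd (dnorm_is_norm Hn) hF.
exists (fun x => F (gx x)); split.
- apply: (bnd_in_dual (M := MF * M)) => [k x y|x].
    rewrite -(in_dual_lin hF); congr F; apply: dual_ext => z /=.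
    by rewrite hr1 (in_dual_lin hxi).
  apply: le_trans (bF _) _; rewrite -mulrA ler_wpM2l //.
- move=> a aL x.
  have -> : gx (rX x a) = ractW HA (gx x) a.
    by apply: dual_ext => z /=; rewrite hr3.
  have := hFa a aL (gx x) => /= h; apply: le_trans h _.
  apply: le_trans (ler_wpM2l (ltW e1) (gxn x)) _.
  rewrite mulrA ler_wpM2r ?(nrm_ge0 HX) // mulrAC ler_pdivrMr ?ltr_wpDl // ler_pM2l //; lra.
- move=> x hx; have -> : gx x = 0 by apply: dual_ext => z /=; rewrite hx.
  exact: (in_dual0 hF).
Qed.
End Right.

Section Left.
Variable lX : A -> X -> X.
Hypothesis hl1 : forall (k : R[i]) a x y, lX a (k *: x + y) = k *: lX a x + lX a y.
Hypothesis hl2 : forall (k : R[i]) a b x, lX (k *: a + b) x = k *: lX a x + lX b x.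
Hypothesis hl3 : forall a b x, lX (mul a b) x = lX a (lX b x).
Hypothesis hl4 : forall a x, nrmX (lX a x) <= nrm a * nrmX x.

Lemma left_extend (eta : X -> R[i]) (heta : in_dual nrmX eta) (L : seq A) (e : R) : 0 < e ->
  exists H : X -> R[i], [/\ in_dual nrmX H,
    (forall a, List.In a L -> forall x, cn (eta (lX a x) - H (lX a x)) <= e * nrmX x) &
    (forall x, (forall y, eta (lX y x) = 0) -> H x = 0)].
Proof.
move=> e0.
have [M M0 bM] := in_dual_bnd HX heta.
have gin : forall x, in_dual nrm (fun y => eta (lX y x)).
  move=> x; apply: (bnd_in_dual (M := M * nrmX x)) => [k a b|y].
    by rewrite hl2 (in_dual_lin heta).
  apply: le_trans (bM _) _; rewrite -mulrA ler_wpM2l // mulrC; exact: hl4.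
pose gx x : W := DualT (gin x).
have gxn : forall x, dn (gx x) <= M * nrmX x.
  move=> x; apply: (dnorm_le Hn); first by rewrite mulr_ge0 // (nrm_ge0 HX).
  by move=> y /=; apply: le_trans (bM _) _; rewrite -mulrA ler_wpM2l // mulrC; exact: hl4.
have e1 : 0 < e / (M + 1) by rewrite divr_gt0 // ltr_wpDl.
have [F [hF hFa]] := left_approx HA HS L e1.
have [MF MF0 bF] := in_dual_bnd (dnorm_is_norm Hn) hF.
exists (fun x => F (gx x)); split.
- apply: (bnd_in_dual (M := MF * M)) => [k x y|x].
    rewrite -(in_dual_lin hF); congr F; apply: dual_ext => z /=.
    by rewrite hl1 (in_dual_lin heta).
  apply: le_trans (bF _) _; rewrite -mulrA ler_wpM2l //.
- move=> a aL x.
  have -> : gx (lX a x) = lactW HA a (gx x).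
    by apply: dual_ext => z /=; rewrite hl3.
  have := hFa a aL (gx x) => /= h; apply: le_trans h _.
  apply: le_trans (ler_wpM2l (ltW e1) (gxn x)) _.
  rewrite mulrA ler_wpM2r ?(nrm_ge0 HX) // mulrAC ler_pdivrMr ?ltr_wpDl // ler_pM2l //; lra.
- move=> x hx; have -> : gx x = 0 by apply: dual_ext => z /=; rewrite hx.
  exact: (in_dual0 hF).
Qed.
End Left.
End Extend.


Section MkNet.
Variable R : realType.
Lemma small_nat (e : R) : 0 < e -> exists n : nat, (n.+1%:R)^-1 <= e.
Proof.
move=> e0; exists (Num.bound e^-1).
have ei : 0 <= e^-1 by rewrite invr_ge0 ltW.
have h := archi_boundP ei.
have h2 : e^-1 < (Num.bound e^-1).+1%:R by apply: lt_le_trans h _; rewrite ler_nat.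
rewrite -[X in _ <= X](invrK e) lef_pV2 ?posrE ?ltr0Sn ?invr_gt0 //; exact: ltW h2.
Qed.

Lemma mk_net (T U : Type) (Q : U -> Prop) (err : T -> U -> R -> Prop) :
  (forall (L : seq T) (e : R), 0 < e -> exists u, Q u /\ forall a, List.In a L -> err a u e) ->
  (forall a u e e', e <= e' -> err a u e -> err a u e') ->
  exists (I : Type) (le : I -> I -> Prop) (f : I -> U),
    [/\ directed le, forall i, Q (f i) &
        forall a e, 0 < e -> exists i0, forall i, le i0 i -> err a (f i) e].
Proof.
move=> hex hmono.
have hex' : forall p : seq T * nat, exists u, Q u /\ forall a, List.In a p.1 -> err a u (p.2.+1%:R)^-1.
  by move=> [L n]; apply: hex; rewrite invr_gt0 ltr0Sn.
have [f hf] := boolp.choice hex'.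
exists (seq T * nat)%type.
exists (fun p q => (forall a, List.In a p.1 -> List.In a q.1) /\ (p.2 <= q.2)%N).
exists f; split.
- split.
  + by constructor; exact: ([::], 0%N).
  + by move=> p; split.
  + move=> p q r [h1 h2] [h3 h4]; split; first by move=> a /h1 /h3.
    exact: leq_trans h4.
  + move=> p q; exists (p.1 ++ q.1, maxn p.2 q.2); split; split.
    * by move=> a ha; apply: List.in_or_app; left.
    * by rewrite leq_maxl.
    * by move=> a ha; apply: List.in_or_app; right.
    * by rewrite leq_maxr.
- by move=> p; case: (hf p).
- move=> a e e0; have [n hn] := small_nat e0.
  exists ([:: a], n) => -[L m] [/= hL hm].
  have [_ h] := hf (L, m); apply: hmono (h a (hL a (or_introl erefl))).
  apply: le_trans hn; rewrite lef_pV2 ?posrE ?ltr0Sn // ler_nat; exact: hm.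
Qed.
End MkNet.


Section BM.
Variables (R : realType) (T : lmodType R[i]) (mul : T -> T -> T) (nrmT : T -> R).
Variables (X : lmodType R[i]) (nrmX : X -> R) (l : T -> X -> X) (r : X -> T -> X).
Hypothesis H : banach_bimodule mul nrmT nrmX l r.
Lemma bm_norm : is_norm nrmX. Proof. by case: H => [[]]. Qed.
Lemma bm_l1 k a x y : l a (k *: x + y) = k *: l a x + l a y. Proof. by case: H => _ [h _] _ _ _; apply: h. Qed.
Lemma bm_l2 k a b x : l (k *: a + b) x = k *: l a x + l b x. Proof. by case: H => _ [_ h] _ _ _; apply: h. Qed.
Lemma bm_r1 k a x y : r (k *: x + y) a = k *: r x a + r y a. Proof. by case: H => _ _ [h _] _ _; apply: h. Qed.
Lemma bm_r2 k a b x : r x (k *: a + b) = k *: r x a + r x b. Proof. by case: H => _ _ [_ h] _ _; apply: h. Qed.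
Lemma bm_lm a b x : l (mul a b) x = l a (l b x). Proof. by case: H => _ _ _ [h _ _] _; apply: h. Qed.
Lemma bm_rm a b x : r x (mul a b) = r (r x a) b. Proof. by case: H => _ _ _ [_ h _] _; apply: h. Qed.
Lemma bm_lr a b x : r (l a x) b = l a (r x b). Proof. by case: H => _ _ _ [_ _ h] _; apply: h. Qed.
Lemma bm_ln a x : nrmX (l a x) <= nrmT a * nrmX x. Proof. by case: H => _ _ _ _ [h _]; apply: h. Qed.
Lemma bm_rn a x : nrmX (r x a) <= nrmX x * nrmT a. Proof. by case: H => _ _ _ _ [_ h]; apply: h. Qed.
Lemma bm_lD a b x : l (a + b) x = l a x + l b x.
Proof. by have := bm_l2 1 a b x; rewrite !scale1r. Qed.
Lemma bm_rD a b x : r x (a + b) = r x a + r x b.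
Proof. by have := bm_r2 1 a b x; rewrite !scale1r. Qed.
Lemma bm_lD' a x y : l a (x + y) = l a x + l a y.
Proof. by have := bm_l1 1 a x y; rewrite !scale1r. Qed.
Lemma bm_rD' a x y : r (x + y) a = r x a + r y a.
Proof. by have := bm_r1 1 a x y; rewrite !scale1r. Qed.
Lemma bm_l0 x : l 0 x = 0.
Proof. by apply: (@addrI _ (l 0 x)); rewrite -bm_lD !addr0. Qed.
Lemma bm_r0 x : r x 0 = 0.
Proof. by apply: (@addrI _ (r x 0)); rewrite -bm_rD !addr0. Qed.
Lemma bm_lB a b x : l (a - b) x = l a x - l b x.
Proof. by have := bm_l2 (-1) b a x; rewrite !scaleN1r addrC => ->; rewrite addrC. Qed.
End BM.

Section Sum.
Variables (R : realType) (A B : lmodType R[i]).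
Variables (mulA : A -> A -> A) (nrmA : A -> R) (mulB : B -> B -> B) (nrmB : B -> R).
Hypothesis HA : banach_algebra mulA nrmA.
Hypothesis HB : banach_algebra mulB nrmB.
Local Notation C := (A * B)%type.
Local Notation mulC := (dsum_mul mulA mulB).
Local Notation nrmC := (dsum_norm nrmA nrmB).
Definition inA (a : A) : C := (a, 0).
Definition inB (b : B) : C := (0, b).

Lemma inA_lin k a a' : inA (k *: a + a') = k *: inA a + inA a'.
Proof. rewrite /inA; rewrite (_ : k *: (a, 0) + (a', 0) = (k *: a + a', k *: 0 + 0 : B)) //.
by rewrite scaler0 addr0. Qed.
Lemma inB_lin k b b' : inB (k *: b + b') = k *: inB b + inB b'.
Proof. rewrite /inB; rewrite (_ : k *: (0, b) + (0, b') = (k *: 0 + 0 : A, k *: b + b')) //.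
by rewrite scaler0 addr0. Qed.
Lemma inA_mul a a' : mulC (inA a) (inA a') = inA (mulA a a').
Proof. by rewrite /dsum_mul /inA /= (mul0l HB). Qed.
Lemma inB_mul b b' : mulC (inB b) (inB b') = inB (mulB b b').
Proof. by rewrite /dsum_mul /inB /= (mul0l HA). Qed.
Lemma inAB_mul a b : mulC (inA a) (inB b) = 0.
Proof. by rewrite /dsum_mul /inA /inB /= (mul0l HB) (mul0r HA). Qed.
Lemma inBA_mul a b : mulC (inB b) (inA a) = 0.
Proof. by rewrite /dsum_mul /inA /inB /= (mul0r HB) (mul0l HA). Qed.
Lemma nrm_inA a : nrmC (inA a) = nrmA a.
Proof. by rewrite /dsum_norm /inA /= (nrm0 (alg_norm HB)) addr0. Qed.
Lemma nrm_inB b : nrmC (inB b) = nrmB b.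
Proof. by rewrite /dsum_norm /inB /= (nrm0 (alg_norm HA)) add0r. Qed.
Lemma split_pair (c : C) : c = 1 *: inA c.1 + inB c.2.
Proof. by case: c => a b; rewrite scale1r /inA /inB; congr pair; rewrite ?addr0 ?add0r. Qed.
Lemma mul_pair_inA (c : C) a : mulC c (inA a) = inA (mulA c.1 a).
Proof. by case: c => a' b; rewrite /dsum_mul /inA /= (mul0r HB). Qed.
Lemma mul_inA_pair (c : C) a : mulC (inA a) c = inA (mulA a c.1).
Proof. by case: c => a' b; rewrite /dsum_mul /inA /= (mul0l HB). Qed.
Lemma mul_pair_inB (c : C) b : mulC c (inB b) = inB (mulB c.2 b).
Proof. by case: c => a' b'; rewrite /dsum_mul /inB /= (mul0r HA). Qed.
Lemma mul_inB_pair (c : C) b : mulC (inB b) c = inB (mulB b c.2).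
Proof. by case: c => a' b'; rewrite /dsum_mul /inB /= (mul0l HA). Qed.

Variables (X : lmodType R[i]) (nrmX : X -> R) (l : C -> X -> X) (r : X -> C -> X).
Hypothesis HX : banach_bimodule mulC nrmC nrmX l r.

Definition lA a x := l (inA a) x.
Definition rA x a := r x (inA a).
Definition lB b x := l (inB b) x.
Definition rB x b := r x (inB b).

Lemma restrA : banach_bimodule mulA nrmA nrmX lA rA.
Proof.
split.
- by case: HX.
- split=> *; rewrite /lA ?inA_lin; [exact: (bm_l1 HX) | exact: (bm_l2 HX)].
- split=> *; rewrite /rA ?inA_lin; [exact: (bm_r1 HX) | exact: (bm_r2 HX)].
- split=> *; rewrite /lA /rA -?inA_mul; [exact: (bm_lm HX) | exact: (bm_rm HX) | exact: (bm_lr HX)].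
- split=> *; rewrite /lA /rA -nrm_inA; [exact: (bm_ln HX) | exact: (bm_rn HX)].
Qed.
Lemma restrB : banach_bimodule mulB nrmB nrmX lB rB.
Proof.
split.
- by case: HX.
- split=> *; rewrite /lB ?inB_lin; [exact: (bm_l1 HX) | exact: (bm_l2 HX)].
- split=> *; rewrite /rB ?inB_lin; [exact: (bm_r1 HX) | exact: (bm_r2 HX)].
- split=> *; rewrite /lB /rB -?inB_mul; [exact: (bm_lm HX) | exact: (bm_rm HX) | exact: (bm_lr HX)].
- split=> *; rewrite /lB /rB -nrm_inB; [exact: (bm_ln HX) | exact: (bm_rn HX)].
Qed.
End Sum.


Section Cn6.
Variable R : realType.
Lemma cn3 (t1 t2 t3 : R[i]) (d n : R) : cn t1 <= d * n -> cn t2 <= d * n -> cn t3 <= d * n ->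
  cn (t1 + t2 - t3) <= 3%:R * d * n.
Proof.
move=> h1 h2 h3; apply: le_trans (cnB _ _) _; apply: le_trans (lerD (cnD _ _) (lexx _)) _.
have -> : 3%:R * d * n = d * n + d * n + d * n by ring.
by rewrite !lerD.
Qed.
Lemma cn6 (t1 t2 t3 s1 s2 s3 : R[i]) (e n : R) :
  cn t1 <= e / 6%:R * n -> cn t2 <= e / 6%:R * n -> cn t3 <= e / 6%:R * n ->
  cn s1 <= e / 6%:R * n -> cn s2 <= e / 6%:R * n -> cn s3 <= e / 6%:R * n ->
  cn ((t1 + t2 - t3) + (s1 + s2 - s3)) <= e * n.
Proof.
move=> h1 h2 h3 h4 h5 h6; apply: le_trans (cnD _ _) _.
have := cn3 h1 h2 h3; have := cn3 h4 h5 h6.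
have -> : e * n = 3%:R * (e / 6%:R) * n + 3%:R * (e / 6%:R) * n.
  by field.
by move=> a b; apply: lerD.
Qed.
End Cn6.

Section PartI.
Variables (R : realType) (A B : lmodType R[i]).
Variables (mulA : A -> A -> A) (nrmA : A -> R) (mulB : B -> B -> B) (nrmB : B -> R).
Hypothesis HA : banach_algebra mulA nrmA.
Hypothesis HB : banach_algebra mulB nrmB.
Local Notation C := (A * B)%type.
Local Notation mulC := (dsum_mul mulA mulB).
Local Notation nrmC := (dsum_norm nrmA nrmB).

Section Mod.
Variables (X : lmodType R[i]) (nrmX : X -> R) (l : C -> X -> X) (r : X -> C -> X).
Hypothesis HX : banach_bimodule mulC nrmC nrmX l r.
Variable D : C -> X -> R[i].
Hypothesis HD : cont_dual_derivation mulC nrmC nrmX l r D.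

Lemma derivA_dual : cont_dual_derivation mulA nrmA nrmX (lA l) (rA r) (fun a => D (inA B a)).
Proof.
case: HD => h1 h2 h3 [M hM]; split.
- by move=> a; apply: h1.
- by move=> k a b x; rewrite inA_lin; apply: h2.
- by move=> a b x; rewrite -(inA_mul _ HB) h3.
- by exists M => a; rewrite -(nrm_inA _ HB a); apply: hM.
Qed.
Lemma derivB_dual : cont_dual_derivation mulB nrmB nrmX (lB l) (rB r) (fun b => D (inB A b)).
Proof.
case: HD => h1 h2 h3 [M hM]; split.
- by move=> a; apply: h1.
- by move=> k a b x; rewrite inB_lin; apply: h2.
- by move=> a b x; rewrite -(inB_mul _ HA) h3.
- by exists M => a; rewrite -(nrm_inB _ HA a); apply: hM.
Qed.
Lemma D_split (c : C) x : D c x = D (inA B c.1) x + D (inB A c.2) x.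
Proof.
case: HD => _ h2 _ _; rewrite {1}(split_pair c) h2 mul1r //.
Qed.
End Mod.
End PartI.


Section PartI2.
Variables (R : realType) (A B : lmodType R[i]).
Variables (mulA : A -> A -> A) (nrmA : A -> R) (mulB : B -> B -> B) (nrmB : B -> R).
Hypothesis HA : banach_algebra mulA nrmA.
Hypothesis HB : banach_algebra mulB nrmB.
Hypothesis HSA : approx_semi_amenable mulA nrmA.
Hypothesis HSB : approx_semi_amenable mulB nrmB.
Local Notation C := (A * B)%type.
Local Notation mulC := (dsum_mul mulA mulB).
Local Notation nrmC := (dsum_norm nrmA nrmB).

Lemma partI : approx_semi_amenable mulC nrmC.
Proof.
move=> X nrmX l r HX D HD.
have HXn := bm_norm HX.
have HXA := restrA HB HX; have HXB := restrB HA HX.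
have HDA := derivA_dual HB HD; have HDB := derivB_dual HA HD.
have [IA [leA [xiA [etaA [dirA hinA convA]]]]] := HSA HXA HDA.
have [IB [leB [xiB [etaB [dirB hinB convB]]]]] := HSB HXB HDB.
pose Q := fun u : (X -> R[i]) * (X -> R[i]) => in_dual nrmX u.1 /\ in_dual nrmX u.2.
pose err := fun c u e => dual_norm_le nrmX (fun x => D c x - dual_ad l r u.1 u.2 c x) e.
have hmono : forall c u (e e' : R), e <= e' -> err c u e -> err c u e'.
  move=> c u e e' ee' h; apply/dnle_bnd => x.
  apply: le_trans ((proj1 (dnle_bnd _ _ _) h) x) _.
  by rewrite ler_wpM2r // (nrm_ge0 HXn).
suff hex : forall (L : seq C) (e : R), 0 < e -> exists u, Q u /\ forall c, List.In c L -> err c u e.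
  have [I [le [f [dir hQ hconv]]]] := mk_net hex hmono.
  by exists I, le, (fun i => (f i).1), (fun i => (f i).2); split.
- move=> L e e0.
  have d0 : 0 < e / 6%:R by rewrite divr_gt0 // ltr0n.
  have [iA hiA] := net_fin dirA (fun a => convA a _ d0) (map fst L).
  have [iB hiB] := net_fin dirB (fun a => convB a _ d0) (map snd L).
  have leiA : leA iA iA by case: dirA => _ h _ _; apply: h.
  have leiB : leB iB iB by case: dirB => _ h _ _; apply: h.
  have [hxA hyA] := hinA iA; have [hxB hyB] := hinB iB.
  have [XA [hXA eXA zXA]] := right_extend HA HSA HXn (bm_r1 HXA) (bm_r2 HXA) (bm_rm HXA) (bm_rn HXA) hxA (map fst L) d0.
  have [YA [hYA eYA zYA]] := left_extend HA HSA HXn (bm_l1 HXA) (bm_l2 HXA) (bm_lm HXA) (bm_ln HXA) hyA (map fst L) d0.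
  have [XB [hXB eXB zXB]] := right_extend HB HSB HXn (bm_r1 HXB) (bm_r2 HXB) (bm_rm HXB) (bm_rn HXB) hxB (map snd L) d0.
  have [YB [hYB eYB zYB]] := left_extend HB HSB HXn (bm_l1 HXB) (bm_l2 HXB) (bm_lm HXB) (bm_ln HXB) hyB (map snd L) d0.
  exists (fun x => XA x + XB x, fun x => YA x + YB x); split.
    by split; apply: in_dual_add.
  move=> c cL; apply/dnle_bnd => x /=.
  have aL : List.In c.1 (map fst L) := List.in_map fst L c cL.
  have bL : List.In c.2 (map snd L) := List.in_map snd L c cL.
  have z1 : XA (r x (inB A c.2)) = 0.
    apply: zXA => y; rewrite /rA -(bm_rm HX) (inBA_mul HA HB) (bm_r0 HX).
    exact: (in_dual0 hxA).
  have z2 : XB (r x (inA B c.1)) = 0.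
    apply: zXB => y; rewrite /rB -(bm_rm HX) (inAB_mul HA HB) (bm_r0 HX).
    exact: (in_dual0 hxB).
  have z3 : YA (l (inB A c.2) x) = 0.
    apply: zYA => y; rewrite /lA -(bm_lm HX) (inAB_mul HA HB) (bm_l0 HX).
    exact: (in_dual0 hyA).
  have z4 : YB (l (inA B c.1) x) = 0.
    apply: zYB => y; rewrite /lB -(bm_lm HX) (inBA_mul HA HB) (bm_l0 HX).
    exact: (in_dual0 hyB).
  have er : r x c = r x (inA B c.1) + r x (inB A c.2).
    by rewrite {1}(split_pair c) (bm_r2 HX) scale1r.
  have el : l c x = l (inA B c.1) x + l (inB A c.2) x.
    by rewrite {1}(split_pair c) (bm_l2 HX) scale1r.
  rewrite /dual_ad /dual_lact /dual_ract /= (D_split HD) er el.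
  rewrite (in_dualD hXA) (in_dualD hXB) (in_dualD hYA) (in_dualD hYB) z1 z2 z3 z4 !addr0 !add0r.
  have b1 := (proj1 (dnle_bnd _ _ _) (hiA iA leiA c.1 aL)) x.
  have b2 := (proj1 (dnle_bnd _ _ _) (hiB iB leiB c.2 bL)) x.
  have b3 := eXA c.1 aL x; have b4 := eYA c.1 aL x.
  have b5 := eXB c.2 bL x; have b6 := eYB c.2 bL x.
  move: b1 b2 b3 b4 b5 b6; rewrite /dual_ad /dual_lact /dual_ract /rA /lA /rB /lB /= => b1 b2 b3 b4 b5 b6.
  set t1 := (X in cn X <= _ ) in b1.
  set s1 := (X in cn X <= _ ) in b2.
  set t2 := (X in cn X <= _ ) in b3.
  set t3 := (X in cn X <= _ ) in b4.
  set s2 := (X in cn X <= _ ) in b5.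
  set s3 := (X in cn X <= _ ) in b6.
  have -> : D (inA B c.1) x + D (inB A c.2) x -
     (XA (r x (inA B c.1)) + XB (r x (inB A c.2)) - (YA (l (inA B c.1) x) + YB (l (inB A c.2) x)))
     = (t1 + t2 - t3) + (s1 + s2 - s3).
    by rewrite /t1 /t2 /t3 /s1 /s2 /s3; ring.
  exact: cn6.
Qed.
End PartI2.


Section Comp.
Variables (R : realType) (X : lmodType R[i]) (nrmX : X -> R).
Hypothesis HXn : is_norm nrmX.
Lemma in_dual_comp (T : X -> X) (K : R) (xi : X -> R[i]) : in_dual nrmX xi ->
  (forall (k : R[i]) x y, T (k *: x + y) = k *: T x + T y) ->
  (forall x, nrmX (T x) <= K * nrmX x) -> in_dual nrmX (fun x => xi (T x)).
Proof.
move=> hxi hT hK; have [M M0 bM] := in_dual_bnd HXn hxi.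
apply: (bnd_in_dual (M := M * K)) => [k x y|x]; first by rewrite hT (in_dual_lin hxi).
by apply: le_trans (bM _) _; rewrite -mulrA ler_wpM2l.
Qed.
End Comp.

Section PartIIa.
Variables (R : realType) (A B : lmodType R[i]).
Variables (mulA : A -> A -> A) (nrmA : A -> R) (mulB : B -> B -> B) (nrmB : B -> R).
Hypothesis HA : banach_algebra mulA nrmA.
Hypothesis HB : banach_algebra mulB nrmB.
Hypothesis CA : central_mb_approx_identity mulA nrmA.
Hypothesis CB : central_mb_approx_identity mulB nrmB.
Hypothesis HSA : bdd_approx_semi_amenable mulA nrmA.
Hypothesis HSB : bdd_approx_semi_amenable mulB nrmB.
Local Notation C := (A * B)%type.
Local Notation mulC := (dsum_mul mulA mulB).
Local Notation nrmC := (dsum_norm nrmA nrmB).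

Lemma partIIa : bdd_approx_semi_amenable mulC nrmC.
Proof.
move=> X nrmX l r HX D HD.
have HXn := bm_norm HX.
have HAn := alg_norm HA; have HBn := alg_norm HB.
have HXA := restrA HB HX; have HXB := restrB HA HX.
have HDA := derivA_dual HB HD; have HDB := derivB_dual HA HD.
have [IA [leA [xiA [etaA [dirA hinA convA [MA hMA]]]]]] := HSA HXA HDA.
have [IB [leB [xiB [etaB [dirB hinB convB [MB hMB]]]]]] := HSB HXB HDB.
have [JA [lejA [eA [dirjA centA convjA [KA hKA]]]]] := CA.
have [JB [lejB [eB [dirjB centB convjB [KB hKB]]]]] := CB.
have [MD hMD] : exists MD, forall c, dual_norm_le nrmX (D c) (MD * nrmC c) by case: HD.
have Dlin : forall (k : R[i]) c c' x, D (k *: c + c') x = k * D c x + D c' x by case: HD.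
pose Mt := `|MA| * `|KA| + `|MB| * `|KB|.
pose Q := fun u : (X -> R[i]) * (X -> R[i]) => [/\ in_dual nrmX u.1, in_dual nrmX u.2 &
   forall c, dual_norm_le nrmX (dual_ad l r u.1 u.2 c) (Mt * nrmC c)].
pose err := fun c u e => dual_norm_le nrmX (fun x => D c x - dual_ad l r u.1 u.2 c x) e.
have hmono : forall c u (e e' : R), e <= e' -> err c u e -> err c u e'.
  move=> c u e e' ee' h; apply/dnle_bnd => x.
  apply: le_trans ((proj1 (dnle_bnd _ _ _) h) x) _.
  by rewrite ler_wpM2r // (nrm_ge0 HXn).
suff hex : forall (L : seq C) (e : R), 0 < e -> exists u, Q u /\ forall c, List.In c L -> err c u e.
  have [I [le [f [dir hQ hconv]]]] := mk_net hex hmono.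
  exists I, le, (fun i => (f i).1), (fun i => (f i).2); split=> //.
  - by move=> i; case: (hQ i).
  - by exists Mt => i c; case: (hQ i).
move=> L e e0.
have d0 : 0 < e / 6%:R by rewrite divr_gt0 // ltr0n.
have dd0 : 0 < e / 6%:R / (`|MD| + 1) by rewrite divr_gt0 // ltr_wpDl.
have [jA hjA] := net_fin dirjA (fun a => convjA a _ dd0) (map fst L).
have [jB hjB] := net_fin dirjB (fun a => convjB a _ dd0) (map snd L).
have lejA' : lejA jA jA by case: dirjA => _ h _ _; apply: h.
have lejB' : lejB jB jB by case: dirjB => _ h _ _; apply: h.
pose ea := eA jA; pose eb := eB jB.
have [iA hiA] := net_fin dirA (fun a => convA a _ d0) (map (fun a => mulA a ea) (map fst L)).
have [iB hiB] := net_fin dirB (fun a => convB a _ d0) (map (fun b => mulB b eb) (map snd L)).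
have leiA : leA iA iA by case: dirA => _ h _ _; apply: h.
have leiB : leB iB iB by case: dirB => _ h _ _; apply: h.
have [hxA hyA] := hinA iA; have [hxB hyB] := hinB iB.
pose u1 := fun x => xiA iA (r x (inA B ea)) + xiB iB (r x (inB A eb)).
pose u2 := fun x => etaA iA (l (inA B ea) x) + etaB iB (l (inB A eb) x).
have ad_eq : forall c x, dual_ad l r u1 u2 c x =
    dual_ad (lA l) (rA r) (xiA iA) (etaA iA) (mulA c.1 ea) x +
    dual_ad (lB l) (rB r) (xiB iB) (etaB iB) (mulB c.2 eb) x.
  move=> c x; rewrite /dual_ad /dual_lact /dual_ract /u1 /u2 /rA /lA /rB /lB.
  rewrite -!(bm_rm HX) -!(bm_lm HX) (mul_pair_inA _ HB) (mul_pair_inB _ HA).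
  rewrite (mul_inA_pair _ HB) (mul_inB_pair _ HA) centA centB; ring.
exists (u1, u2); split.
  split.
  - apply: in_dual_add.
      apply: (in_dual_comp HXn (K := nrmC (inA B ea))) => //; first by move=> *; apply: (bm_r1 HX).
      by move=> x; rewrite mulrC; apply: (bm_rn HX).
    apply: (in_dual_comp HXn (K := nrmC (inB A eb))) => //; first by move=> *; apply: (bm_r1 HX).
    by move=> x; rewrite mulrC; apply: (bm_rn HX).
  - apply: in_dual_add.
      apply: (in_dual_comp HXn (K := nrmC (inA B ea))) => //; first by move=> *; apply: (bm_l1 HX).
      by move=> x; apply: (bm_ln HX).
    apply: (in_dual_comp HXn (K := nrmC (inB A eb))) => //; first by move=> *; apply: (bm_l1 HX).
    by move=> x; apply: (bm_ln HX).
  - move=> c; apply/dnle_bnd => x /=; rewrite ad_eq.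
    apply: le_trans (cnD _ _) _.
    have b1 := (proj1 (dnle_bnd _ _ _) (hMA iA (mulA c.1 ea))) x.
    have b2 := (proj1 (dnle_bnd _ _ _) (hMB iB (mulB c.2 eb))) x.
    have n1 : MA * nrmA (mulA c.1 ea) <= `|MA| * `|KA| * nrmA c.1.
      rewrite -centA; apply: le_trans (ler_norm _) _; rewrite normrM (ger0_norm (nrm_ge0 HAn _)).
      rewrite -mulrA ler_wpM2l //; apply: le_trans (hKA _ _) _.
      by rewrite ler_wpM2r ?(nrm_ge0 HAn) ?ler_norm.
    have n2 : MB * nrmB (mulB c.2 eb) <= `|MB| * `|KB| * nrmB c.2.
      rewrite -centB; apply: le_trans (ler_norm _) _; rewrite normrM (ger0_norm (nrm_ge0 HBn _)).
      rewrite -mulrA ler_wpM2l //; apply: le_trans (hKB _ _) _.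
      by rewrite ler_wpM2r ?(nrm_ge0 HBn) ?ler_norm.
    have x0 := nrm_ge0 HXn x.
    have a0 := nrm_ge0 HAn c.1; have bb0 := nrm_ge0 HBn c.2.
    have p0 : 0 <= `|MA| * `|KA| by rewrite mulr_ge0.
    have q0 : 0 <= `|MB| * `|KB| by rewrite mulr_ge0.
    have m1 := ler_wpM2r x0 n1; have m2 := ler_wpM2r x0 n2.
    rewrite /Mt /dsum_norm.
    apply: le_trans (lerD (le_trans b1 m1) (le_trans b2 m2)) _.
    rewrite -subr_ge0.
    have -> : (`|MA| * `|KA| + `|MB| * `|KB|) * (nrmA c.1 + nrmB c.2) * nrmX x -
      (`|MA| * `|KA| * nrmA c.1 * nrmX x + `|MB| * `|KB| * nrmB c.2 * nrmX x) =
      (`|MA| * `|KA| * nrmB c.2 + `|MB| * `|KB| * nrmA c.1) * nrmX x by ring.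
    by rewrite mulr_ge0 // addr_ge0 // mulr_ge0.
move=> c cL; apply/dnle_bnd => x /=.
have aL : List.In c.1 (map fst L) := List.in_map fst L c cL.
have bL : List.In c.2 (map snd L) := List.in_map snd L c cL.
have aL' : List.In (mulA c.1 ea) (map (fun a => mulA a ea) (map fst L)) := List.in_map _ _ _ aL.
have bL' : List.In (mulB c.2 eb) (map (fun b => mulB b eb) (map snd L)) := List.in_map _ _ _ bL.
rewrite ad_eq (D_split HD).
have b2 := (proj1 (dnle_bnd _ _ _) (hiA iA leiA _ aL')) x.
have b4 := (proj1 (dnle_bnd _ _ _) (hiB iB leiB _ bL')) x.
have b1 : cn (D (inA B c.1) x - D (inA B (mulA c.1 ea)) x) <= e / 6%:R * nrmX x.
  have -> : D (inA B c.1) x - D (inA B (mulA c.1 ea)) x = D (inA B ((-1) *: mulA c.1 ea + c.1)) x.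
    by rewrite inA_lin Dlin mulN1r addrC.
  have := (proj1 (dnle_bnd _ _ _) (hMD (inA B ((-1) *: mulA c.1 ea + c.1)))) x.
  rewrite (nrm_inA _ HB) => h; apply: le_trans h _; rewrite ler_wpM2r ?(nrm_ge0 HXn) //.
  have hn : nrmA ((-1) *: mulA c.1 ea + c.1) < e / 6%:R / (`|MD| + 1).
    by rewrite scaleN1r addrC -centA -(nrmN HAn) opprB; apply: hjA.
  apply: le_trans (ler_norm _) _; rewrite normrM (ger0_norm (nrm_ge0 HAn _)).
  have m0 : 0 <= `|MD| := normr_ge0 MD.
  apply: le_trans (ler_wpM2l m0 (ltW hn)) _.
  have hq : `|MD| / (`|MD| + 1) <= 1 by rewrite ler_pdivrMr ?ltr_wpDl // mul1r lerDl.
  rewrite mulrA [`|MD| * (e / 6%:R)]mulrC -mulrA.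
  by rewrite ler_piMr // ltW.
have b3 : cn (D (inB A c.2) x - D (inB A (mulB c.2 eb)) x) <= e / 6%:R * nrmX x.
  have -> : D (inB A c.2) x - D (inB A (mulB c.2 eb)) x = D (inB A ((-1) *: mulB c.2 eb + c.2)) x.
    by rewrite inB_lin Dlin mulN1r addrC.
  have := (proj1 (dnle_bnd _ _ _) (hMD (inB A ((-1) *: mulB c.2 eb + c.2)))) x.
  rewrite (nrm_inB _ HA) => h; apply: le_trans h _; rewrite ler_wpM2r ?(nrm_ge0 HXn) //.
  have hn : nrmB ((-1) *: mulB c.2 eb + c.2) < e / 6%:R / (`|MD| + 1).
    by rewrite scaleN1r addrC -centB -(nrmN HBn) opprB; apply: hjB.
  apply: le_trans (ler_norm _) _; rewrite normrM (ger0_norm (nrm_ge0 HBn _)).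
  have m0 : 0 <= `|MD| := normr_ge0 MD.
  apply: le_trans (ler_wpM2l m0 (ltW hn)) _.
  have hq : `|MD| / (`|MD| + 1) <= 1 by rewrite ler_pdivrMr ?ltr_wpDl // mul1r lerDl.
  rewrite mulrA [`|MD| * (e / 6%:R)]mulrC -mulrA.
  by rewrite ler_piMr // ltW.
have z0 : cn 0 <= e / 6%:R * nrmX x by rewrite cn0 mulr_ge0 ?(nrm_ge0 HXn) // ltW.
move: b2 b4; rewrite /dual_ad /dual_lact /dual_ract /rA /lA /rB /lB /= => b2 b4.
set t1 := (X in cn X <= _ ) in b1.
set t2 := (X in cn X <= _ ) in b2.
set s1 := (X in cn X <= _ ) in b3.
set s2 := (X in cn X <= _ ) in b4.
have -> : D (inA B c.1) x + D (inB A c.2) x -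
    (xiA iA (r x (inA B (mulA c.1 ea))) - etaA iA (l (inA B (mulA c.1 ea)) x) +
     (xiB iB (r x (inB A (mulB c.2 eb))) - etaB iB (l (inB A (mulB c.2 eb)) x)))
   = (t1 + t2 - 0) + (s1 + s2 - 0).
  by rewrite /t1 /t2 /s1 /s2; ring.
exact: cn6.
Qed.
End PartIIa.


Lemma rearr4 (V : zmodType) (a a' p b b' q : V) :
  (a + b) - (p + q) = ((a - a') + (a' - p)) + ((b - b') + (b' - q)).
Proof. by rewrite !addrA !subrK opprD !addrA; congr (_ + _); rewrite addrAC. Qed.

Section PartIIb.
Variables (R : realType) (A B : lmodType R[i]).
Variables (mulA : A -> A -> A) (nrmA : A -> R) (mulB : B -> B -> B) (nrmB : B -> R).
Hypothesis HA : banach_algebra mulA nrmA.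
Hypothesis HB : banach_algebra mulB nrmB.
Hypothesis CA : central_mb_approx_identity mulA nrmA.
Hypothesis CB : central_mb_approx_identity mulB nrmB.
Hypothesis HSA : bdd_approx_semi_contractible mulA nrmA.
Hypothesis HSB : bdd_approx_semi_contractible mulB nrmB.
Local Notation C := (A * B)%type.
Local Notation mulC := (dsum_mul mulA mulB).
Local Notation nrmC := (dsum_norm nrmA nrmB).

Section Mod.
Variables (Y : lmodType R[i]) (nrmY : Y -> R) (l : C -> Y -> Y) (r : Y -> C -> Y).
Hypothesis HY : banach_bimodule mulC nrmC nrmY l r.
Variable D : C -> Y.
Hypothesis HD : cont_derivation mulC nrmC nrmY l r D.
Lemma derivA_gen : cont_derivation mulA nrmA nrmY (lA l) (rA r) (fun a => D (inA B a)).
Proof.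
case: HD => h2 h3 [M hM]; split.
- by move=> k a b; rewrite inA_lin; apply: h2.
- by move=> a b; rewrite -(inA_mul _ HB) h3.
- by exists M => a; rewrite -(nrm_inA _ HB a); apply: hM.
Qed.
Lemma derivB_gen : cont_derivation mulB nrmB nrmY (lB l) (rB r) (fun b => D (inB A b)).
Proof.
case: HD => h2 h3 [M hM]; split.
- by move=> k a b; rewrite inB_lin; apply: h2.
- by move=> a b; rewrite -(inB_mul _ HA) h3.
- by exists M => a; rewrite -(nrm_inB _ HA a); apply: hM.
Qed.
End Mod.

Lemma partIIb : bdd_approx_semi_contractible mulC nrmC.
Proof.
move=> Y nrmY l r HY D HD.
have HYn := bm_norm HY.
have HAn := alg_norm HA; have HBn := alg_norm HB.
have HYA := restrA HB HY; have HYB := restrB HA HY.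
have HDA := derivA_gen HD; have HDB := derivB_gen HD.
have [IA [leA [xiA [etaA [dirA convA [MA hMA]]]]]] := HSA HYA HDA.
have [IB [leB [xiB [etaB [dirB convB [MB hMB]]]]]] := HSB HYB HDB.
have [JA [lejA [eA [dirjA centA convjA [KA hKA]]]]] := CA.
have [JB [lejB [eB [dirjB centB convjB [KB hKB]]]]] := CB.
have [MD hMD] : exists MD, forall c, nrmY (D c) <= MD * nrmC c by case: HD.
have Dlin : forall (k : R[i]) c c', D (k *: c + c') = k *: D c + D c' by case: HD.
pose Mt := `|MA| * `|KA| + `|MB| * `|KB|.
pose Q := fun u : Y * Y => forall c, nrmY (ad l r u.1 u.2 c) <= Mt * nrmC c.
pose err := fun c (u : Y * Y) e => nrmY (D c - ad l r u.1 u.2 c) < e.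
have hmono : forall c u (e e' : R), e <= e' -> err c u e -> err c u e'.
  by move=> c u e e' ee' h; apply: lt_le_trans h ee'.
suff hex : forall (L : seq C) (e : R), 0 < e -> exists u, Q u /\ forall c, List.In c L -> err c u e.
  have [I [le [f [dir hQ hconv]]]] := mk_net hex hmono.
  exists I, le, (fun i => (f i).1), (fun i => (f i).2); split=> //.
  by exists Mt => i c; apply: hQ.
move=> L e e0.
have d0 : 0 < e / 8%:R by rewrite divr_gt0 // ltr0n.
have dd0 : 0 < e / 8%:R / (`|MD| + 1) by rewrite divr_gt0 // ltr_wpDl.
have [jA hjA] := net_fin dirjA (fun a => convjA a _ dd0) (map fst L).
have [jB hjB] := net_fin dirjB (fun a => convjB a _ dd0) (map snd L).
have lejA' : lejA jA jA by case: dirjA => _ h _ _; apply: h.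
have lejB' : lejB jB jB by case: dirjB => _ h _ _; apply: h.
pose ea := eA jA; pose eb := eB jB.
have [iA hiA] := net_fin dirA (fun a => convA a _ d0) (map (fun a => mulA a ea) (map fst L)).
have [iB hiB] := net_fin dirB (fun a => convB a _ d0) (map (fun b => mulB b eb) (map snd L)).
have leiA : leA iA iA by case: dirA => _ h _ _; apply: h.
have leiB : leB iB iB by case: dirB => _ h _ _; apply: h.
pose u1 := l (inA B ea) (xiA iA) + l (inB A eb) (xiB iB).
pose u2 := r (etaA iA) (inA B ea) + r (etaB iB) (inB A eb).
have ad_eq : forall c, ad l r u1 u2 c =
    ad (lA l) (rA r) (xiA iA) (etaA iA) (mulA c.1 ea) +
    ad (lB l) (rB r) (xiB iB) (etaB iB) (mulB c.2 eb).
  move=> c; rewrite /ad /u1 /u2 /rA /lA /rB /lB.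
  rewrite (bm_lD' HY) (bm_rD' HY) -!(bm_rm HY) -!(bm_lm HY) (mul_pair_inA _ HB) (mul_pair_inB _ HA).
  rewrite (mul_inA_pair _ HB) (mul_inB_pair _ HA) centA centB.
  by rewrite opprD addrACA.
exists (u1, u2); split.
  move=> c /=; rewrite ad_eq.
  apply: le_trans (nrmD HYn _ _) _.
  have b1 := hMA iA (mulA c.1 ea).
  have b2 := hMB iB (mulB c.2 eb).
  have n1 : MA * nrmA (mulA c.1 ea) <= `|MA| * `|KA| * nrmA c.1.
    rewrite -centA; apply: le_trans (ler_norm _) _; rewrite normrM (ger0_norm (nrm_ge0 HAn _)).
    rewrite -mulrA ler_wpM2l //; apply: le_trans (hKA _ _) _.
    by rewrite ler_wpM2r ?(nrm_ge0 HAn) ?ler_norm.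
  have n2 : MB * nrmB (mulB c.2 eb) <= `|MB| * `|KB| * nrmB c.2.
    rewrite -centB; apply: le_trans (ler_norm _) _; rewrite normrM (ger0_norm (nrm_ge0 HBn _)).
    rewrite -mulrA ler_wpM2l //; apply: le_trans (hKB _ _) _.
    by rewrite ler_wpM2r ?(nrm_ge0 HBn) ?ler_norm.
  have a0 := nrm_ge0 HAn c.1; have bb0 := nrm_ge0 HBn c.2.
  rewrite /Mt /dsum_norm.
  apply: le_trans (lerD (le_trans b1 n1) (le_trans b2 n2)) _.
  rewrite -subr_ge0.
  have -> : (`|MA| * `|KA| + `|MB| * `|KB|) * (nrmA c.1 + nrmB c.2) -
    (`|MA| * `|KA| * nrmA c.1 + `|MB| * `|KB| * nrmB c.2) =
    (`|MA| * `|KA| * nrmB c.2 + `|MB| * `|KB| * nrmA c.1) by ring.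
  by rewrite addr_ge0 // mulr_ge0 // mulr_ge0.
move=> c cL; rewrite /err /=.
have aL : List.In c.1 (map fst L) := List.in_map fst L c cL.
have bL : List.In c.2 (map snd L) := List.in_map snd L c cL.
have aL' : List.In (mulA c.1 ea) (map (fun a => mulA a ea) (map fst L)) := List.in_map _ _ _ aL.
have bL' : List.In (mulB c.2 eb) (map (fun b => mulB b eb) (map snd L)) := List.in_map _ _ _ bL.
have Dsplit : D c = D (inA B c.1) + D (inB A c.2).
  by rewrite {1}(split_pair c) Dlin scale1r.
rewrite ad_eq Dsplit (rearr4 _ (D (inA B (mulA c.1 ea))) _ _ (D (inB A (mulB c.2 eb)))).
have b2 := hiA iA leiA _ aL'.
have b4 := hiB iB leiB _ bL'.
have b1 : nrmY (D (inA B c.1) - D (inA B (mulA c.1 ea))) <= e / 8%:R.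
  have -> : D (inA B c.1) - D (inA B (mulA c.1 ea)) = D (inA B ((-1) *: mulA c.1 ea + c.1)).
    by rewrite inA_lin Dlin scaleN1r addrC.
  apply: le_trans (hMD _) _; rewrite (nrm_inA _ HB).
  have hn : nrmA ((-1) *: mulA c.1 ea + c.1) < e / 8%:R / (`|MD| + 1).
    by rewrite scaleN1r addrC -centA -(nrmN HAn) opprB; apply: hjA.
  apply: le_trans (ler_norm _) _; rewrite normrM (ger0_norm (nrm_ge0 HAn _)).
  have m0 : 0 <= `|MD| := normr_ge0 MD.
  apply: le_trans (ler_wpM2l m0 (ltW hn)) _.
  have hq : `|MD| / (`|MD| + 1) <= 1 by rewrite ler_pdivrMr ?ltr_wpDl // mul1r lerDl.
  rewrite mulrA [`|MD| * (e / 8%:R)]mulrC -mulrA.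
  by rewrite ler_piMr // ltW.
have b3 : nrmY (D (inB A c.2) - D (inB A (mulB c.2 eb))) <= e / 8%:R.
  have -> : D (inB A c.2) - D (inB A (mulB c.2 eb)) = D (inB A ((-1) *: mulB c.2 eb + c.2)).
    by rewrite inB_lin Dlin scaleN1r addrC.
  apply: le_trans (hMD _) _; rewrite (nrm_inB _ HA).
  have hn : nrmB ((-1) *: mulB c.2 eb + c.2) < e / 8%:R / (`|MD| + 1).
    by rewrite scaleN1r addrC -centB -(nrmN HBn) opprB; apply: hjB.
  apply: le_trans (ler_norm _) _; rewrite normrM (ger0_norm (nrm_ge0 HBn _)).
  have m0 : 0 <= `|MD| := normr_ge0 MD.
  apply: le_trans (ler_wpM2l m0 (ltW hn)) _.
  have hq : `|MD| / (`|MD| + 1) <= 1 by rewrite ler_pdivrMr ?ltr_wpDl // mul1r lerDl.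
  rewrite mulrA [`|MD| * (e / 8%:R)]mulrC -mulrA.
  by rewrite ler_piMr // ltW.
apply: le_lt_trans (nrmD HYn _ _) _.
apply: le_lt_trans (lerD (nrmD HYn _ _) (nrmD HYn _ _)) _.
have : e / 8%:R + e / 8%:R + (e / 8%:R + e / 8%:R) < e.
  have -> : e / 8%:R + e / 8%:R + (e / 8%:R + e / 8%:R) = e / 2%:R by field.
  by rewrite ltr_pdivrMr // ltr_pMr // ltr1n.
apply: le_lt_trans.
by rewrite !lerD // ltW.
Qed.
End PartIIb.

Theorem theorem5p1 (R : realType) :
  (forall (A B : lmodType R[i]) (mulA : A -> A -> A) (nrmA : A -> R)
          (mulB : B -> B -> B) (nrmB : B -> R),
      banach_algebra mulA nrmA -> banach_algebra mulB nrmB ->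
      approx_semi_amenable mulA nrmA -> approx_semi_amenable mulB nrmB ->
      approx_semi_amenable (dsum_mul mulA mulB) (dsum_norm nrmA nrmB)) /\
  (forall (A B : lmodType R[i]) (mulA : A -> A -> A) (nrmA : A -> R)
          (mulB : B -> B -> B) (nrmB : B -> R),
      banach_algebra mulA nrmA -> banach_algebra mulB nrmB ->
      central_mb_approx_identity mulA nrmA -> central_mb_approx_identity mulB nrmB ->
      (bdd_approx_semi_amenable mulA nrmA -> bdd_approx_semi_amenable mulB nrmB ->
       bdd_approx_semi_amenable (dsum_mul mulA mulB) (dsum_norm nrmA nrmB)) /\
      (bdd_approx_semi_contractible mulA nrmA -> bdd_approx_semi_contractible mulB nrmB ->
       bdd_approx_semi_contractible (dsum_mul mulA mulB) (dsum_norm nrmA nrmB))).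
Proof.
split.
- by move=> A B mulA nrmA mulB nrmB HA HB HSA HSB; apply: partI.
- move=> A B mulA nrmA mulB nrmB HA HB CA CB; split.
  + by move=> HSA HSB; apply: partIIa.
  + by move=> HSA HSB; apply: partIIb.
Qed.
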